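(* Let $\mathcal{X}$ be $\mathbb{E}^2$ or $\mathbb{H}^2$ and let $M$ be a locally-finite map in $\mathcal{X}$ with exactly one end such that $V(M)$ is a locally finite collection of vertices. Suppose $G\le\mathrm{Isom}(\mathcal{X})$ acts quasi-transitively on $M$. Then $G$ is a discrete group of isometries of $\mathcal{X}$.
   Context: A map $M$ in a surface $X$ is a (simple, connected, infinite) graph embedded in $X$: vertices are distinct points, edges are curves meeting only at common endpoints, and each face (component of the complement) is homeomorphic to an open disc. $M$ is locally-finite / has one end if its underlying graph does (ends = equivalence classes of rays, two rays equivalent if joined by infinitely many disjoint paths). $V(M)$ is a locally finite collection of vertices if every compact subset of $\mathcal{X}$ contains only finitely many vertices of $M$. A group $G\le\mathrm{Isom}(\mathcal{X})$ acts on $M$ if each $g\in G$ maps $M$ to itself with $g(V(M))=V(M)$ inducing a graph automorphism; it acts quasi-transitively if it has finitely many orbits on $V(M)$. *)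

(* Defs.v *)
(* The surface X is modelled as a subset of R*R:
   E^2 = whole plane with Euclidean distance; H^2 = upper half-plane model
   with its hyperbolic distance. *)
From HB Require Import structures.
From mathcomp Require Import all_boot all_order all_algebra.
From mathcomp Require Import all_classical all_reals all_analysis.
Set Implicit Arguments. Unset Strict Implicit. Unset Printing Implicit Defensive.
Import Order.TTheory GRing.Theory Num.Theory.
Import numFieldNormedType.Exports.
Local Open Scope classical_set_scope.
Local Open Scope ring_scope.

Section Defs.
Variable R : realType.
Notation pt := (R * R)%type.

Inductive geom := Euclid | Hyperbolic.

Definition eucl (p q : pt) : R :=
  Num.sqrt ((p.1 - q.1) ^+ 2 + (p.2 - q.2) ^+ 2).

Definition carrier (X : geom) : set pt :=
  match X with Euclid => setT | Hyperbolic => [set p | 0 < p.2] end.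

Definition dist (X : geom) (p q : pt) : R :=
  match X with
  | Euclid => eucl p q
  | Hyperbolic =>
      let a := eucl p q in let b := eucl p (q.1, - q.2) in
      ln ((b + a) / (b - a))
  end.

Definition isometry (X : geom) (g : pt -> pt) : Prop :=
  [/\ forall x, carrier X x -> carrier X (g x),
      (forall y, carrier X y -> exists2 x, carrier X x & g x = y) &
      forall x y, carrier X x -> carrier X y -> dist X (g x) (g y) = dist X x y].

(** G is a subgroup of Isom(X); maps are identified when they agree on X. *)
Definition isom_subgroup (X : geom) (G : set (pt -> pt)) : Prop :=
  [/\ forall g, G g -> isometry X g,
      (exists2 e, G e & forall x, carrier X x -> e x = x),
      (forall g h, G g -> G h -> G (g \o h)) &
      forall g, G g -> exists2 h, G h & forall x, carrier X x -> h (g x) = x].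

(** G is discrete in the compact-open topology on Isom(X): the identity is
    isolated, i.e. some basic neighbourhood
    {g | sup_{x in K} d(g x, x) < eps}, K compact, contains only the identity. *)
Definition discrete_group (X : geom) (G : set (pt -> pt)) : Prop :=
  exists K : set pt, [/\ K `<=` carrier X, compact K &
    exists2 eps : R, 0 < eps &
      forall g, G g -> (forall x, K x -> dist X (g x) x < eps) ->
        forall x, carrier X x -> g x = x].

Definition gpath (V : set pt) (adj : pt -> pt -> Prop) (s : seq pt) : Prop :=
  s <> [::] /\ (forall i, (i < size s)%N -> V (nth (0,0) s i)) /\
  (forall i, (i.+1 < size s)%N -> adj (nth (0,0) s i) (nth (0,0) s i.+1)).

Definition ray (V : set pt) (adj : pt -> pt -> Prop) (r : nat -> pt) : Prop :=
  injective r /\ (forall n, V (r n)) /\ (forall n, adj (r n) (r n.+1)).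

Definition equiv_rays (V : set pt) (adj : pt -> pt -> Prop) (r1 r2 : nat -> pt) :=
  exists P : nat -> seq pt,
    (forall k, gpath V adj (P k) /\ range r1 (head (0,0) (P k))
                /\ range r2 (last (0,0) (P k))) /\
    (forall k l, k <> l -> forall x, x \in P k -> x \notin P l).

Definition one_ended (V : set pt) (adj : pt -> pt -> Prop) : Prop :=
  (exists r, ray V adj r) /\
  (forall r1 r2, ray V adj r1 -> ray V adj r2 -> equiv_rays V adj r1 r2).

Definition locally_finite_graph (V : set pt) (adj : pt -> pt -> Prop) :=
  forall v, V v -> finite_set [set u | adj v u].

Definition simple_conn_inf_graph (V : set pt) (adj : pt -> pt -> Prop) :=
  [/\ forall u v, adj u v -> V u /\ V v,
      forall u v, adj u v -> adj v u,
      forall u, ~ adj u u,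
      forall u v, V u -> V v -> exists s, gpath V adj s /\
                  head (0,0) s = u /\ last (0,0) s = v &
      ~ finite_set V].

Definition arc (X : geom) (A : set pt) (u v : pt) : Prop :=
  exists gam : R -> pt,
    [/\ {within `[0, 1], continuous gam},
        {in `[0, 1] &, injective gam},
        gam 0 = u /\ gam 1 = v,
        gam @` `[0, 1] = A & A `<=` carrier X].

Definition open_disc : set pt := [set p | p.1 ^+ 2 + p.2 ^+ 2 < 1].

Definition homeomorphic_to_disc (F : set pt) : Prop :=
  exists (phi psi : pt -> pt),
    [/\ forall x, F x -> open_disc (phi x),
        forall y, open_disc y -> F (psi y),
        forall x, F x -> psi (phi x) = x &
        forall y, open_disc y -> phi (psi y) = y] /\
    ({within F, continuous phi} /\ {within open_disc, continuous psi}).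

Definition map_points (V : set pt) (adj : pt -> pt -> Prop)
    (E : pt -> pt -> set pt) : set pt :=
  V `|` [set x | exists u v, adj u v /\ E u v x].

(** M = (V, adj, E) is a map in X: E u v is the image of the edge uv. *)
Definition is_map (X : geom) (V : set pt) (adj : pt -> pt -> Prop)
    (E : pt -> pt -> set pt) : Prop :=
  [/\ simple_conn_inf_graph V adj,
      V `<=` carrier X,
      (forall u v, adj u v -> E u v = E v u /\ arc X (E u v) u v),
      ((forall u v w, adj u v -> V w -> E u v w -> w = u \/ w = v) /\
      (forall u v u' v', adj u v -> adj u' v' -> ~ ([set u; v] = [set u'; v']) ->
         forall x, E u v x -> E u' v' x ->
           (x = u \/ x = v) /\ (x = u' \/ x = v'))) &
      forall x, (carrier X `\` map_points V adj E) x ->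
        homeomorphic_to_disc
          (connected_component (carrier X `\` map_points V adj E) x)].

Definition locally_finite_vertices (X : geom) (V : set pt) : Prop :=
  forall K : set pt, K `<=` carrier X -> compact K -> finite_set (K `&` V).

Definition acts_on (G : set (pt -> pt)) (V : set pt) (adj : pt -> pt -> Prop)
    (E : pt -> pt -> set pt) : Prop :=
  forall g, G g ->
    [/\ g @` V = V,
        (forall u v, V u -> V v -> (adj u v <-> adj (g u) (g v))) &
        (forall u v, adj u v -> g @` E u v = E (g u) (g v))].

Definition quasi_transitive (G : set (pt -> pt)) (V : set pt) : Prop :=
  exists reps : seq pt, forall v, V v ->
    exists2 w, w \in reps & exists2 g, G g & g w = v.

End Defs.

(* Main.v *)
From HB Require Import structures.
Require Import Defs.
From mathcomp Require Import all_boot all_order all_algebra.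
From mathcomp Require Import all_classical all_reals all_analysis.
From mathcomp Require Import ring lra.
Set Implicit Arguments. Unset Strict Implicit. Unset Printing Implicit Defensive.
Import Order.TTheory GRing.Theory Num.Theory.
Local Open Scope classical_set_scope.
Local Open Scope ring_scope.

Section Alg.
Variable R : realType.

Lemma lin3 (A B C q1 q2 q3 r1 r2 r3 : R) :
  A + B*q1 + C*r1 = 0 -> A + B*q2 + C*r2 = 0 -> A + B*q3 + C*r3 = 0 ->
  (q2-q1)*(r3-r1) - (q3-q1)*(r2-r1) != 0 -> B = 0 /\ C = 0.
Proof.
move=> e1 e2 e3 hd.
have hC : C * ((q2-q1)*(r3-r1) - (q3-q1)*(r2-r1)) =
  (q2-q1)*((A + B*q3 + C*r3) - (A + B*q1 + C*r1)) - (q3-q1)*((A + B*q2 + C*r2) - (A + B*q1 + C*r1)) by ring.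
have hB : B * ((q2-q1)*(r3-r1) - (q3-q1)*(r2-r1)) =
  (r3-r1)*((A + B*q2 + C*r2) - (A + B*q1 + C*r1)) - (r2-r1)*((A + B*q3 + C*r3) - (A + B*q1 + C*r1)) by ring.
rewrite e1 e2 e3 !subrr !mulr0 subrr in hC hB.
split; apply/eqP.
  by move/eqP: hB; rewrite mulf_eq0 (negbTE hd) orbF.
by move/eqP: hC; rewrite mulf_eq0 (negbTE hd) orbF.
Qed.

Definition Fl (al be u1 u2 p1 p2 d1 d2 : R) :=
  al*(2*(d1*(u1-p1) + d2*(u2-p2)) + (d1^+2+d2^+2)) - be*((u1-p1)^+2+(u2-p2)^+2)*d2.
Definition Dd (u1 u2 a1 a2 b1 b2 : R) :=
  ((u1-a1)^+2+(u2-a2)^+2) - ((u1-b1)^+2+(u2-b2)^+2).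
Definition m1 (al be u1 u2 a1 a2 b1 b2 : R) := 2*al*(b1-a1).
Definition m2 (al be u1 u2 a1 a2 b1 b2 : R) := 2*al*(b2-a2) - be * Dd u1 u2 a1 a2 b1 b2.
Definition Ll (al be u1 u2 a1 a2 b1 b2 : R) :=
  2*al*((- m2 al be u1 u2 a1 a2 b1 b2)*(u1-a1) + (m1 al be u1 u2 a1 a2 b1 b2)*(u2-a2))
   - be*((u1-a1)^+2+(u2-a2)^+2)*(m1 al be u1 u2 a1 a2 b1 b2).

Lemma local_alg (al be u1 u2 a1 a2 b1 b2 : R) : 0 < al ->
  Ll al be u1 u2 a1 a2 b1 b2 != 0 ->
  exists2 de : R, 0 < de & forall d1 d2,
    Fl al be u1 u2 a1 a2 d1 d2 = 0 -> Fl al be u1 u2 b1 b2 d1 d2 = 0 ->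
    d1^+2 + d2^+2 < de -> d1 = 0 /\ d2 = 0.
Proof.
rewrite /Ll; set M1 := m1 _ _ _ _ _ _ _ _; set M2 := m2 _ _ _ _ _ _ _ _.
set L := (X in X != 0) => al0 L0.
set M := M1^+2 + M2^+2.
have M0 : 0 < M.
  rewrite lt_neqAle addr_ge0 ?sqr_ge0 // andbT; apply/negP => /eqP M0.
  move/eqP: M0; rewrite eq_sym /M paddr_eq0 ?sqr_ge0 // !sqrf_eq0 => /andP[/eqP h1 /eqP h2].
  move: L0; rewrite /L h1 h2.
  have -> : 2 * al * (- 0 * (u1 - a1) + 0 * (u2 - a2)) - be * ((u1 - a1) ^+ 2 + (u2 - a2) ^+ 2) * 0 = 0 by ring.
  by rewrite eqxx.
exists (L^+2 / (al^+2 * M)).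
  by apply: divr_gt0; [rewrite lt_def sqr_ge0 andbT sqrf_eq0 L0 | apply: mulr_gt0 => //; apply: exprn_gt0].
move=> d1 d2 Fa Fb hd.
have dm : d1 * M1 + d2 * M2 = 0.
  have <- : Fl al be u1 u2 a1 a2 d1 d2 - Fl al be u1 u2 b1 b2 d1 d2 = d1 * M1 + d2 * M2.
    by rewrite /Fl /M1 /M2 /m1 /m2 /Dd; ring.
  by rewrite Fa Fb subrr.
set mu := d1 * (-M2) + d2 * M1.
have e1 : d1 * M = mu * (-M2).
  apply/eqP; rewrite -subr_eq0; apply/eqP.
  have -> : d1 * M - mu * (-M2) = M1 * (d1 * M1 + d2 * M2) by rewrite /M /mu; ring.
  by rewrite dm mulr0.
have e2 : d2 * M = mu * M1.
  apply/eqP; rewrite -subr_eq0; apply/eqP.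
  have -> : d2 * M - mu * M1 = M2 * (d1 * M1 + d2 * M2) by rewrite /M /mu; ring.
  by rewrite dm mulr0.
have key : M * (mu * L + al * mu^+2) = 0.
  have -> : M * (mu * L + al * mu^+2) = M^+2 * Fl al be u1 u2 a1 a2 d1 d2.
    have -> : M * (mu * L + al * mu^+2) = 
      2*al*((mu*(-M2))*M*(u1-a1) + (mu*M1)*M*(u2-a2)) - be*((u1-a1)^+2+(u2-a2)^+2)*(mu*M1)*M
      + al * ((mu*(-M2))^+2 + (mu*M1)^+2) by rewrite /L /M; ring.
    rewrite -e1 -e2 /Fl; ring.
  by rewrite Fa mulr0.
have key2 : mu * (L + al * mu) = 0.
  apply/eqP; move/eqP: key; rewrite mulf_eq0 (gt_eqF M0) /=.
  by move/eqP => h; apply/eqP; rewrite -h; ring.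
have mu0 : mu = 0.
  case: (eqVneq mu 0) => [//|mun0]; exfalso.
  move/eqP: key2; rewrite mulf_eq0 (negbTE mun0) /= => /eqP hL.
  have hL' : L = - (al * mu) by apply/eqP; rewrite -subr_eq0 -hL; apply/eqP; ring.
  have hdm : (d1^+2 + d2^+2) * M^+2 = mu^+2 * M.
    have -> : (d1^+2 + d2^+2) * M^+2 = (d1*M)^+2 + (d2*M)^+2 by ring.
    by rewrite e1 e2 /M; ring.
  move: hd; rewrite ltr_pdivlMr; last by apply: mulr_gt0 => //; apply: exprn_gt0.
  rewrite hL'.
  have -> : (- (al * mu)) ^+ 2 = al^+2 * (mu^+2 * M) / M by field; rewrite gt_eqF.
  rewrite -hdm.
  have -> : al ^+ 2 * ((d1 ^+ 2 + d2 ^+ 2) * M ^+ 2) / M = (d1 ^+ 2 + d2 ^+ 2) * (al ^+ 2 * M) by field; rewrite gt_eqF.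
  by rewrite ltxx.
split.
  by apply/eqP; move/eqP: (e1); rewrite mu0 mul0r mulf_eq0 (gt_eqF M0) orbF.
by apply/eqP; move/eqP: (e2); rewrite mu0 mul0r mulf_eq0 (gt_eqF M0) orbF.
Qed.
End Alg.

Section Geo.
Variable R : realType.
Notation pt := (R * R)%type.

Definition ed2 (p q : pt) : R := (p.1-q.1)^+2 + (p.2-q.2)^+2.

Lemma ed2_ge0 p q : 0 <= ed2 p q.
Proof. by rewrite /ed2 addr_ge0 ?sqr_ge0. Qed.

Lemma eucl_sqr (p q : pt) : eucl p q ^+ 2 = ed2 p q.
Proof. by rewrite /eucl sqr_sqrtr // ed2_ge0. Qed.

Lemma eucl_ge0 (p q : pt) : 0 <= eucl p q.
Proof. exact: sqrtr_ge0. Qed.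

Lemma hyp_ab (p q : pt) : 0 < p.2 -> 0 < q.2 ->
  let a := eucl p q in let b := eucl p (q.1, - q.2) in
  [/\ 0 <= a, 0 <= b, b ^+ 2 = a ^+ 2 + 4 * p.2 * q.2 & a < b].
Proof.
move=> p0 q0 a b.
have ha : a ^+ 2 = ed2 p q by rewrite eucl_sqr.
have hb : b ^+ 2 = a ^+ 2 + 4 * p.2 * q.2.
  by rewrite /b eucl_sqr ha /ed2 /=; ring.
have a0 : 0 <= a by apply: eucl_ge0.
have b0 : 0 <= b by apply: eucl_ge0.
split => //.
have : 0 < 4 * p.2 * q.2 by rewrite !mulr_gt0.
nra.
Qed.

Definition relX (X : geom) (x y p : pt) : Prop :=
  match X with
  | Euclid => ed2 y p = ed2 x p
  | Hyperbolic => ed2 y p * x.2 = ed2 x p * y.2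
  end.

Lemma dist_rel X x y p : carrier X x -> carrier X y -> carrier X p ->
  dist X y p = dist X x p -> relX X x y p.
Proof.
case: X => /= Cx Cy Cp.
  by move=> h; rewrite -eucl_sqr h eucl_sqr.
have [a0 b0 hb ab] := hyp_ab Cy Cp.
have [a0' b0' hb' ab'] := hyp_ab Cx Cp.
move: hb hb' a0 b0 ab a0' b0' ab'.
set a := eucl y p; set b := eucl y _; set a' := eucl x p; set b' := eucl x _.
move=> hb hb' a0 b0 ab a0' b0' ab' h.
have pos1 : 0 < (b + a) / (b - a).
  by apply: divr_gt0; lra.
have pos2 : 0 < (b' + a') / (b' - a').
  by apply: divr_gt0; lra.
have := ln_inj (x:= (b + a) / (b - a)) (y := (b' + a') / (b' - a')).
rewrite !posrE => /(_ pos1 pos2 h) he.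
have ba : b - a != 0 by rewrite subr_eq0 gt_eqF.
have ba' : b' - a' != 0 by rewrite subr_eq0 gt_eqF.
have hc : (b + a) * (b' - a') = (b' + a') * (b - a).
  by move/eqP: he; rewrite eqr_div // => /eqP.
have hab : a * b' = a' * b by nra.
have hsq : a^+2 * b'^+2 = a'^+2 * b^+2 by rewrite -!exprMn hab.
rewrite hb hb' in hsq.
rewrite -!eucl_sqr -/a -/a'.
have p20 : 0 < p.2 by [].
have : a ^+ 2 * x.2 * (4 * p.2) = a' ^+ 2 * y.2 * (4 * p.2) by nra.
by move/(mulIf _)=> -> //; rewrite mulf_neq0 // gt_eqF.
Qed.

Lemma dist_small X q : carrier X q -> forall de : R, 0 < de ->
  exists2 eps : R, 0 < eps & forall p, carrier X p -> dist X p q < eps -> ed2 p q < de.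
Proof.
case: X => /= Cq de de0.
  exists (Num.sqrt de); first by rewrite sqrtr_gt0.
  by move=> p _; rewrite /eucl ltr_sqrt.
set s := Num.sqrt de.
have s0 : 0 < s by rewrite sqrtr_gt0.
have q0 : 0 < q.2 := Cq.
have gt1 : 1 < 1 + s / q.2 by rewrite ltrDl divr_gt0.
exists (ln (1 + s / q.2)); first exact: ln_gt0.
move=> p Cp.
have [a0 b0 hb ab] := hyp_ab Cp Cq.
move: a0 b0 hb ab.
set a := eucl p q; set b := eucl p _ => a0 b0 hb ab.
apply: contraTT => hde; rewrite -leNgt; rewrite -leNgt in hde.
have sa : s <= a by rewrite /s /a /eucl ler_sqrt // ed2_ge0.
have ha : a ^+ 2 = ed2 p q by rewrite eucl_sqr.
have h1 : p.2 - q.2 <= a.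
  have : (p.2 - q.2)^+2 <= a^+2 by rewrite ha /ed2 lerDr sqr_ge0.
  nra.
have h2 : b <= a + 2 * q.2.
  have : b ^+ 2 <= (a + 2 * q.2)^+2 by rewrite hb; nra.
  nra.
have pos1 : 0 < 1 + s / q.2 by lra.
have pos2 : 0 < (b + a) / (b - a) by apply: divr_gt0; lra.
rewrite ler_ln ?posrE //.
have ba : 0 < b - a by lra.
rewrite ler_pdivlMr //.
set t := s / q.2.
have t0 : 0 <= t by rewrite /t divr_ge0 // ltW.
have ht : t * q.2 = s by rewrite /t divfK // gt_eqF.
nra.
Qed.

Lemma ed2_eq0 (w v : pt) : ed2 w v = 0 -> w = v.
Proof.
move/eqP; rewrite /ed2 paddr_eq0 ?sqr_ge0 // !sqrf_eq0 !subr_eq0 => /andP[/eqP h1 /eqP h2].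
by case: w v h1 h2 => [? ?] [? ?] /= -> ->.
Qed.

Lemma seq_min (s : seq pt) (v : pt) :
  exists2 de : R, 0 < de & forall w, w \in s -> w <> v -> de <= ed2 w v.
Proof.
elim: s => [|x s [de de0 IH]]; first by exists 1 => //.
case: (eqVneq x v) => [->|xv].
  exists de => // w; rewrite inE => /orP[/eqP -> //|]; exact: IH.
have ex0 : 0 < ed2 x v.
  rewrite lt_def ed2_ge0 andbT; apply/eqP => /ed2_eq0 h; by rewrite h eqxx in xv.
exists (Num.min de (ed2 x v)); first by rewrite lt_min de0.
move=> w; rewrite inE => /orP[/eqP -> _|ws wv]; first by rewrite ge_min lexx orbT.
by rewrite ge_min IH.
Qed.

Lemma isolate X (V : set pt) : locally_finite_vertices X V -> V `<=` carrier X ->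
  forall v, V v -> exists2 de : R, 0 < de & forall w, V w -> ed2 w v < de -> w = v.
Proof.
move=> lf VC v Vv.
have [r r0 hr] : exists2 r : R, 0 < r &
    (`[v.1 - r, v.1 + r] `*` `[v.2 - r, v.2 + r]) `<=` carrier X.
  case: X lf VC => lf VC; first by exists 1.
  have v0 : 0 < v.2 := VC _ Vv.
  exists (v.2 / 2); first by rewrite divr_gt0.
  move=> p [_ /=]; rewrite in_itv /= => /andP[h _].
  rewrite /carrier /=; lra.
set K := `[v.1 - r, v.1 + r] `*` `[v.2 - r, v.2 + r].
have cK : compact K by apply: compact_setX; apply: segment_compact.
have [s hs] := iffLR (finite_seqP (K `&` V)) (lf K hr cK).
have [de1 de10 hde1] := seq_min s v.
exists (Num.min de1 (r ^+ 2)); first by rewrite lt_min de10 exprn_gt0.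
move=> w Vw; rewrite lt_min => /andP[h1 h2].
have Kw : K w.
  have e1 : (w.1 - v.1)^+2 < r^+2 by apply: le_lt_trans h2; rewrite /ed2 lerDl sqr_ge0.
  have e2 : (w.2 - v.2)^+2 < r^+2 by apply: le_lt_trans h2; rewrite /ed2 lerDr sqr_ge0.
  split; rewrite /= in_itv /=; apply/andP; split; nra.
have : [set` s] w by rewrite -hs.
rewrite /= => ws.
apply/eqP/negP => /negP/eqP wv.
by have := hde1 w ws wv; rewrite leNgt h1.
Qed.

Definition rX X (p : pt) : R := match X with Euclid => p.2 | Hyperbolic => p.1^+2 + p.2^+2 end.
Definition detX X (a b u : pt) : R :=
  (b.1-a.1)*(rX X u - rX X a) - (u.1-a.1)*(rX X b - rX X a).

Lemma pair_eq (x y : pt) : x.1 = y.1 -> x.2 = y.2 -> x = y.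
Proof. by case: x y => [? ?] [? ?] /= -> ->. Qed.

Lemma rigid3 X a b u : detX X a b u != 0 -> forall x y, carrier X x ->
  relX X x y a -> relX X x y b -> relX X x y u -> y = x.
Proof.
case: X => hd x y Cx ha hb hu.
  set A := (y.1^+2 + y.2^+2) - (x.1^+2 + x.2^+2).
  set B := -2 * (y.1 - x.1); set C := -2 * (y.2 - x.2).
  have h p : relX Euclid x y p -> A + B * p.1 + C * rX Euclid p = 0.
    move=> /= hp; have -> : A + B * p.1 + C * p.2 = ed2 y p - ed2 x p.
      by rewrite /A /B /C /ed2; ring.
    by rewrite hp subrr.
  have [B0 C0] := lin3 (h _ ha) (h _ hb) (h _ hu) hd.
  apply: pair_eq.
    by move: B0; rewrite /B => /eqP; rewrite mulf_eq0 subr_eq0 => /orP[/eqP|/eqP] //; lra.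
  by move: C0; rewrite /C => /eqP; rewrite mulf_eq0 subr_eq0 => /orP[/eqP|/eqP] //; lra.
set A := x.2 * (y.1^+2 + y.2^+2) - y.2 * (x.1^+2 + x.2^+2).
set B := -2 * (x.2 * y.1 - y.2 * x.1); set C := x.2 - y.2.
have h p : relX Hyperbolic x y p -> A + B * p.1 + C * rX Hyperbolic p = 0.
  move=> /= hp; have -> : A + B * p.1 + C * (p.1^+2 + p.2^+2) = ed2 y p * x.2 - ed2 x p * y.2.
    by rewrite /A /B /C /ed2; ring.
  by rewrite hp subrr.
have [B0 C0] := lin3 (h _ ha) (h _ hb) (h _ hu) hd.
have e2 : y.2 = x.2 by move: C0; rewrite /C; lra.
have x0 : 0 < x.2 := Cx.
apply: pair_eq => //.
move: B0; rewrite /B e2 => B0.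
have : x.2 * (y.1 - x.1) = 0 by nra.
by move/eqP; rewrite mulf_eq0 (gt_eqF x0) /= subr_eq0 => /eqP.
Qed.

Definition alX X (u : pt) : R := match X with Euclid => 1 | Hyperbolic => u.2 end.
Definition beX X : R := match X with Euclid => 0 | Hyperbolic => 1 end.
Definition LX X (a b u : pt) := Ll (alX X u) (beX X) u.1 u.2 a.1 a.2 b.1 b.2.

Lemma rel_F X u y p : relX X u y p ->
  Fl (alX X u) (beX X) u.1 u.2 p.1 p.2 (y.1-u.1) (y.2-u.2) = 0.
Proof.
case: X => /= h.
  have -> : Fl 1 0 u.1 u.2 p.1 p.2 (y.1 - u.1) (y.2 - u.2) = ed2 y p - ed2 u p.
    by rewrite /Fl /ed2; ring.
  by rewrite h subrr.
have -> : Fl u.2 1 u.1 u.2 p.1 p.2 (y.1 - u.1) (y.2 - u.2) = ed2 y p * u.2 - ed2 u p * y.2.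
  by rewrite /Fl /ed2; ring.
by rewrite h subrr.
Qed.

Lemma local_rig X a b u : carrier X u -> LX X a b u != 0 ->
  exists2 de : R, 0 < de & forall y, relX X u y a -> relX X u y b -> ed2 y u < de -> y = u.
Proof.
move=> Cu L0.
have al0 : 0 < alX X u by case: X Cu L0 => //=.
have [de de0 H] := local_alg al0 L0.
exists de => // y ha hb hy.
have [h1 h2] := H _ _ (rel_F ha) (rel_F hb) hy.
by apply: pair_eq; apply/eqP; rewrite -subr_eq0; apply/eqP.
Qed.

Lemma good_u X (a b : pt) : carrier X a -> carrier X b -> a <> b ->
  exists u, [/\ carrier X u, LX X a b u != 0 & detX X a b u != 0].
Proof.
move=> Ca Cb ab.
have e0 : 0 < ed2 b a.
  rewrite lt_def ed2_ge0 andbT; apply/eqP => /ed2_eq0 h; exact: ab (esym h).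
case: X Ca Cb => Ca Cb.
  exists (a.1 - (b.2 - a.2), a.2 + (b.1 - a.1)); split => //.
    rewrite /LX /Ll /m1 /m2 /Dd /=.
    have -> : 2 * 1 * (- (2 * 1 * (b.2 - a.2) - 0 * ((a.1 - (b.2 - a.2) - a.1) ^+ 2 + (a.2 + (b.1 - a.1) - a.2) ^+ 2 -
      ((a.1 - (b.2 - a.2) - b.1) ^+ 2 + (a.2 + (b.1 - a.1) - b.2) ^+ 2))) * (a.1 - (b.2 - a.2) - a.1) +
      2 * 1 * (b.1 - a.1) * (a.2 + (b.1 - a.1) - a.2)) -
      0 * ((a.1 - (b.2 - a.2) - a.1) ^+ 2 + (a.2 + (b.1 - a.1) - a.2) ^+ 2) * (2 * 1 * (b.1 - a.1))
      = 4 * ed2 b a by rewrite /ed2; ring.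
    by rewrite mulf_neq0 // gt_eqF.
  rewrite /detX /=.
  have -> : (b.1 - a.1) * (a.2 + (b.1 - a.1) - a.2) - (a.1 - (b.2 - a.2) - a.1) * (b.2 - a.2) = ed2 b a
    by rewrite /ed2; ring.
  by rewrite gt_eqF.
have a0 : 0 < a.2 := Ca.
have b0 : 0 < b.2 := Cb.
case: (eqVneq a.1 b.1) => [e1|ne1].
  have ne2 : a.2 != b.2.
    apply/eqP => e2; apply: ab; exact: pair_eq.
  exists (a.1 + 1, a.2); split => //.
    rewrite /LX /Ll /m1 /m2 /Dd /= -e1.
    set Z := (X in X != 0).
    have -> : Z = -2 * a.2 * (b.2 - a.2) * (a.2 + b.2) by rewrite /Z; ring.
    have h1 : -2 != 0 :> R by rewrite oppr_eq0 pnatr_eq0.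
    have h2 : a.2 != 0 by rewrite gt_eqF.
    have h3 : b.2 - a.2 != 0 by rewrite subr_eq0 eq_sym.
    have h4 : a.2 + b.2 != 0 by rewrite gt_eqF // addr_gt0.
    by rewrite !mulf_neq0.
  rewrite /detX /= -e1.
  set Z := (X in X != 0).
  have -> : Z = (a.2 - b.2) * (a.2 + b.2) by rewrite /Z; ring.
  have h3 : a.2 - b.2 != 0 by rewrite subr_eq0.
  have h4 : a.2 + b.2 != 0 by rewrite gt_eqF // addr_gt0.
  by rewrite !mulf_neq0.
exists (a.1, 2 * a.2); split => //=.
    rewrite /carrier /=; lra.
  rewrite /LX /Ll /m1 /m2 /Dd /=.
  set Z := (X in X != 0).
  have -> : Z = 12 * a.2^+3 * (b.1 - a.1) by rewrite /Z; ring.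
  have h2 : a.2 != 0 by rewrite gt_eqF.
  have h3 : b.1 - a.1 != 0 by rewrite subr_eq0 eq_sym.
  by rewrite !mulf_neq0 ?expf_neq0 // pnatr_eq0.
rewrite /detX /=.
set Z := (X in X != 0).
have -> : Z = 3 * a.2^+2 * (b.1 - a.1) by rewrite /Z; ring.
have h2 : a.2 != 0 by rewrite gt_eqF.
have h3 : b.1 - a.1 != 0 by rewrite subr_eq0 eq_sym.
by rewrite !mulf_neq0 ?expf_neq0 // pnatr_eq0.
Qed.
End Geo.

Theorem lemma2p4 (R : realType) (X : geom) (V : set (R * R)%type)
    (adj : (R * R)%type -> (R * R)%type -> Prop)
    (E : (R * R)%type -> (R * R)%type -> set (R * R)%type)
    (G : set ((R * R)%type -> (R * R)%type)) :
  is_map X V adj E ->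
  locally_finite_graph V adj ->
  one_ended V adj ->
  locally_finite_vertices X V ->
  isom_subgroup X G ->
  acts_on G V adj E ->
  quasi_transitive G V ->
  discrete_group X G.
Proof.
move=> [[_ _ _ _ infV] VC _ _ _] _ _ lfV [Giso _ _ _] act _.
have [v1 Vv1] : exists v, V v.
  case: (pselect (exists v, V v)) => // nV; exfalso; apply: infV.
  have -> : V = set0 by apply/seteqP; split => x // Vx; apply: nV; exists x.
  exact: finite_set0.
have [v2 [Vv2 v21]] : exists v, V v /\ v <> v1.
  case: (pselect (exists v, V v /\ v <> v1)) => // nV; exfalso; apply: infV.
  apply: (@sub_finite_set _ _ [set v1]); last exact: finite_set1.
  move=> x Vx; apply/eqP/negP => /negP/eqP xv; apply: nV; exists x; split => //.
have Cv1 := VC _ Vv1; have Cv2 := VC _ Vv2.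
have [u [Cu L0 d0]] := good_u Cv1 Cv2 (nesym v21).
have [de1 de10 I1] := isolate lfV VC Vv1.
have [de2 de20 I2] := isolate lfV VC Vv2.
have [de3 de30 I3] := local_rig Cu L0.
have [e1 e10 S1] := dist_small Cv1 de10.
have [e2 e20 S2] := dist_small Cv2 de20.
have [e3 e30 S3] := dist_small Cu de30.
exists ([set v1] `|` [set v2] `|` [set u]); split.
- by move=> x [[->|->]|->].
- by apply: compactU; [apply: compactU|]; apply: compact_set1.
exists (Num.min e1 (Num.min e2 e3)); first by rewrite !lt_min e10 e20 e30.
move=> g Gg hK.
have [gC _ gd] := Giso g Gg.
have [gV _ _] := act g Gg.
have gVv w : V w -> V (g w) by move=> Vw; rewrite -gV; exists w.
have hv1 : g v1 = v1.
  apply: I1; first exact: gVv.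
  apply: S1; first exact: gC.
  have := hK v1 (or_introl (or_introl erefl)).
  by rewrite !lt_min => /andP[].
have hv2 : g v2 = v2.
  apply: I2; first exact: gVv.
  apply: S2; first exact: gC.
  have := hK v2 (or_introl (or_intror erefl)).
  by rewrite !lt_min => /and3P[].
have rel x p : carrier X x -> carrier X p -> g p = p -> relX X x (g x) p.
  move=> Cx Cp gp; apply: dist_rel => //; first exact: gC.
  by rewrite -{1}gp; apply: gd.
have hu : g u = u.
  apply: I3; [exact: rel|exact: rel|].
  apply: S3; first exact: gC.
  have := hK u (or_intror erefl).
  by rewrite !lt_min => /and3P[].
move=> x Cx.
apply: (rigid3 d0) => //; exact: rel.
Qed.
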